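(* Let $Z$ be a compact, arcwise connected, approximately self-similar metric space with a $\kappa$-approximation $\{G_k\}_{k\in\mathbb N}$. For $d_0>0$ let $\mathcal F_0$ be the family of curves $\gamma\subset Z$ with $\mathrm{diam}(\gamma)\ge d_0$. Then, for $d_0$ sufficiently small (compared to $\mathrm{diam}Z$ and to the self-similarity constant $L_0$), for every $p\ge1$ there is a constant $C>0$ such that, writing $M_k=\mathrm{Mod}_p(\mathcal F_0,G_k)$, one has $M_{k+\ell}\le C\,M_k\,M_\ell$ for all $k,\ell\in\mathbb N$. Moreover, when $p$ ranges over a compact subset of $[1,\infty)$, $C$ may be chosen independent of $p$.
   Context: A compact metric space $(Z,d)$ is approximately self-similar if there is $L_0\ge1$ such that for every ball $B(z,r)\subset Z$ with $0<r\le\mathrm{diam}Z$ there is an open subset $U\subset Z$ which is $L_0$-bi-Lipschitz homeomorphic to the rescaled ball $(B(z,r),\frac1r d)$. Combinatorial modulus: for a compact metric space $Z$, $\kappa\ge1$, $k\in\mathbb N$, a finite graph $G_k$ is a $\kappa$-approximation of $Z$ on scale $k$ if it is the incidence graph of a finite covering of $Z$ (vertices identified with covering sets; distinct vertices adjacent iff they intersect) such that each vertex $v$ has $z_v$ with $B(z_v,\kappa^{-1}2^{-k})\subset v\subset B(z_v,\kappa2^{-k})$ and the balls $B(z_v,\kappa^{-1}2^{-k})$ are pairwise disjoint for distinct vertices; $\{G_k\}$ is a $\kappa$-approximation if each $G_k$ is one on scale $k$. For $\rho:G_k^0\to\mathbb R_+$, $L_\rho(\gamma)=\sum_{v\cap\gamma\ne\emptyset}\rho(v)$,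 $M_p(\rho)=\sum_v\rho(v)^p$; $\mathrm{Mod}_p(\mathcal F,G_k)=\inf M_p(\rho)$ over $\rho$ with $L_\rho(\gamma)\ge1$ for all $\gamma\in\mathcal F$. *)

(* Defs.v *)
From Stdlib Require Import Reals Lra ClassicalEpsilon.
Open Scope R_scope.
Set Implicit Arguments.
Unset Strict Implicit.

Section Metric.
Variable Z : Type.
Variable d : Z -> Z -> R.

Definition IsMetric : Prop :=
  (forall x y, 0 <= d x y) /\ (forall x y, d x y = 0 <-> x = y) /\
  (forall x y, d x y = d y x) /\ (forall x y z, d x z <= d x y + d y z).

Definition ball (z : Z) (r : R) : Z -> Prop := fun y => d z y < r.

Definition IsOpen (U : Z -> Prop) : Prop :=
  forall y, U y -> exists e, 0 < e /\ forall w, ball y e w -> U w.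

(* compactness = sequential compactness (equivalent for metric spaces) *)
Definition CompactSpace : Prop :=
  forall u : nat -> Z, exists (phi : nat -> nat) (z : Z),
    (forall n m, (n < m)%nat -> (phi n < phi m)%nat) /\
    forall e, 0 < e -> exists N, forall n, (N <= n)%nat -> d (u (phi n)) z < e.

(* continuity of a map [0,1] -> Z (the map is given on R, only [0,1] matters) *)
Definition ContOn01 (g : R -> Z) : Prop :=
  forall t, 0 <= t <= 1 -> forall e, 0 < e -> exists de, 0 < de /\
    forall s, 0 <= s <= 1 -> Rabs (s - t) < de -> d (g s) (g t) < e.

Definition ArcConnected : Prop :=
  forall x y, x <> y -> exists g : R -> Z, ContOn01 g /\
    (forall s t, 0 <= s <= 1 -> 0 <= t <= 1 -> g s = g t -> s = t) /\
    g 0 = x /\ g 1 = y.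

Definition IsDiamZ (D : R) : Prop := is_lub (fun t => exists x y, t = d x y) D.

Definition ApproxSelfSimilar : Prop :=
  exists L0, 1 <= L0 /\
    forall (D : R) (z : Z) (r : R), IsDiamZ D -> 0 < r <= D ->
      exists (U : Z -> Prop) (f : Z -> Z),
        IsOpen U /\
        (forall x, ball z r x -> U (f x)) /\
        (forall y, U y -> exists x, ball z r x /\ f x = y) /\
        (forall x y, ball z r x -> ball z r y ->
           (1 / L0) * (d x y / r) <= d (f x) (f y) /\
           d (f x) (f y) <= L0 * (d x y / r)).

(* a finite covering with centres; vertices are the indices i < a_N *)
Record Approx : Type := mkApprox {
  a_N : nat;
  a_V : nat -> Z -> Prop;
  a_c : nat -> Z }.

Definition IsKappaApproxScale (kappa : R) (k : nat) (A : Approx) : Prop :=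
  (forall z, exists i, (i < a_N A)%nat /\ a_V A i z) /\
  (forall i, (i < a_N A)%nat ->
     (forall y, ball (a_c A i) (/ kappa * (/ 2) ^ k) y -> a_V A i y) /\
     (forall y, a_V A i y -> ball (a_c A i) (kappa * (/ 2) ^ k) y)) /\
  (forall i j y, (i < a_N A)%nat -> (j < a_N A)%nat -> i <> j ->
     ball (a_c A i) (/ kappa * (/ 2) ^ k) y ->
     ball (a_c A j) (/ kappa * (/ 2) ^ k) y -> False).

Definition IsKappaApprox (kappa : R) (G : nat -> Approx) : Prop :=
  forall k, IsKappaApproxScale kappa k (G k).

(* a curve is (the image of) a continuous map g : [0,1] -> Z *)
Definition Curve : Type := R -> Z.

Definition curve_meets (g : Curve) (S : Z -> Prop) : Prop :=
  exists t, 0 <= t <= 1 /\ S (g t).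

Definition F0 (d0 : R) (g : Curve) : Prop :=
  ContOn01 g /\
  exists D, is_lub (fun u => exists s t, 0 <= s <= 1 /\ 0 <= t <= 1 /\ u = d (g s) (g t)) D
            /\ d0 <= D.

End Metric.

Fixpoint rsum (n : nat) (f : nat -> R) : R :=
  match n with O => 0 | S m => rsum m f + f m end.

(* x^p for x >= 0, p > 0 (with 0^p = 0) *)
Definition rpow (x p : R) : R :=
  if Rle_dec x 0 then 0 else Rpower x p.

Definition is_glb (E : R -> Prop) (m : R) : Prop :=
  (forall x, E x -> m <= x) /\ (forall b, (forall x, E x -> b <= x) -> b <= m).

Section Modulus.
Variable Z : Type.

Definition Lrho (A : Approx Z) (rho : nat -> R) (g : Curve Z) : R :=
  rsum (a_N A) (fun i =>
    if excluded_middle_informative (curve_meets g (a_V A i)) then rho i else 0).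

Definition Mp (A : Approx Z) (p : R) (rho : nat -> R) : R :=
  rsum (a_N A) (fun i => rpow (rho i) p).

Definition ModValues (p : R) (F : Curve Z -> Prop) (A : Approx Z) (m : R) : Prop :=
  exists rho : nat -> R,
    (forall i, (i < a_N A)%nat -> 0 <= rho i) /\
    (forall g, F g -> 1 <= Lrho A rho g) /\
    m = Mp A p rho.

Definition IsMod (p : R) (F : Curve Z -> Prop) (A : Approx Z) (m : R) : Prop :=
  is_glb (ModValues p F A) m.
End Modulus.

(* Main.v *)
Require Import Defs.
From Stdlib Require Import Reals Lra Lia List Classical ClassicalEpsilon ZArith.
Open Scope R_scope.

Definition ifr (P : Prop) (x : R) : R :=
  if excluded_middle_informative P then x else 0.

Lemma ifr_T P x : P -> ifr P x = x.
Proof. intro H; unfold ifr; destruct excluded_middle_informative; tauto. Qed.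
Lemma ifr_F P x : ~P -> ifr P x = 0.
Proof. intro H; unfold ifr; destruct excluded_middle_informative; tauto. Qed.
Lemma ifr_nonneg P x : 0 <= x -> 0 <= ifr P x.
Proof. unfold ifr; destruct excluded_middle_informative; lra. Qed.
Lemma ifr_le P x y : 0 <= x -> x <= y -> ifr P x <= ifr P y.
Proof. unfold ifr; destruct excluded_middle_informative; lra. Qed.
Lemma ifr_le_x P x : 0 <= x -> ifr P x <= x.
Proof. unfold ifr; destruct excluded_middle_informative; lra. Qed.
Lemma ifr_mul P x : ifr P x = x * ifr P 1.
Proof. unfold ifr; destruct excluded_middle_informative; lra. Qed.
Lemma ifr_imp (P Q : Prop) x : 0 <= x -> (P -> Q) -> ifr P x <= ifr Q x.
Proof. intros H1 H2; unfold ifr; do 2 destruct excluded_middle_informative; try tauto; lra. Qed.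
Lemma ifr_and (P Q : Prop) x : ifr (P /\ Q) x = ifr P (ifr Q x).
Proof. unfold ifr; repeat destruct excluded_middle_informative; tauto. Qed.

Lemma rsum_ext n f g : (forall i, (i < n)%nat -> f i = g i) -> rsum n f = rsum n g.
Proof. induction n; simpl; intros H; auto. rewrite IHn by (intros; apply H; lia). rewrite (H n) by lia; auto. Qed.
Lemma rsum_le n f g : (forall i, (i < n)%nat -> f i <= g i) -> rsum n f <= rsum n g.
Proof. induction n; simpl; intros H; [lra|]. assert (H1 := IHn (fun i h => H i ltac:(lia))). assert (H2 := H n ltac:(lia)). lra. Qed.
Lemma rsum_nonneg n f : (forall i, (i < n)%nat -> 0 <= f i) -> 0 <= rsum n f.
Proof. intro H. replace 0 with (rsum n (fun _ => 0)). apply rsum_le; auto. induction n; simpl; auto. rewrite IHn; [lra|]. intros; apply H; lia. Qed.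
Lemma rsum_zero n : rsum n (fun _ => 0) = 0.
Proof. induction n; simpl; auto. rewrite IHn; lra. Qed.
Lemma rsum_plus n f g : rsum n (fun i => f i + g i) = rsum n f + rsum n g.
Proof. induction n; simpl; auto. lra. rewrite IHn; lra. Qed.
Lemma rsum_scal n c f : rsum n (fun i => c * f i) = c * rsum n f.
Proof. induction n; simpl. lra. rewrite IHn; lra. Qed.
Lemma rsum_const n c : rsum n (fun _ => c) = INR n * c.
Proof. induction n; simpl rsum. simpl; lra. rewrite IHn, S_INR; lra. Qed.
Lemma rsum_swap n m f : rsum n (fun i => rsum m (fun j => f i j)) = rsum m (fun j => rsum n (fun i => f i j)).
Proof. induction n; simpl. rewrite rsum_zero; auto. rewrite IHn. rewrite <- rsum_plus. auto. Qed.
Lemma rsum_term n f i : (forall j, (j < n)%nat -> 0 <= f j) -> (i < n)%nat -> f i <= rsum n f.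
Proof. induction n; intros H Hi; [lia|]. simpl. destruct (Nat.eq_dec i n).
 subst. assert (0 <= rsum n f) by (apply rsum_nonneg; intros; apply H; lia). lra.
 assert (f i <= rsum n f) by (apply IHn; [intros; apply H; lia| lia]). assert (0 <= f n) by (apply H; lia). lra. Qed.
Lemma rsum_bound n f c : (forall i, (i < n)%nat -> f i <= c) -> rsum n f <= INR n * c.
Proof. intro H. rewrite <- rsum_const. apply rsum_le; auto. Qed.

Lemma rpow_nonneg x p : 0 <= rpow x p.
Proof. unfold rpow; destruct Rle_dec; [lra|]. unfold Rpower; left; apply exp_pos. Qed.
Lemma rpow_pos x p : 0 < x -> 0 < rpow x p.
Proof. intro; unfold rpow; destruct Rle_dec; [lra|]. unfold Rpower; apply exp_pos. Qed.
Lemma rpow_0 p : rpow 0 p = 0.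
Proof. unfold rpow; destruct Rle_dec; lra. Qed.
Lemma rpow_mult x y p : 0 <= x -> 0 <= y -> rpow (x*y) p = rpow x p * rpow y p.
Proof. intros Hx Hy. destruct (Req_dec x 0). subst; rewrite Rmult_0_l, !rpow_0; lra.
 destruct (Req_dec y 0). subst; rewrite Rmult_0_r, !rpow_0; lra.
 unfold rpow. destruct (Rle_dec (x*y) 0). assert (0 < x*y) by (apply Rmult_lt_0_compat; lra). lra.
 destruct (Rle_dec x 0); [lra|]. destruct (Rle_dec y 0); [lra|]. rewrite Rpower_mult_distr; auto; lra. Qed.
Lemma rpow_le x y p : 0 <= p -> 0 <= x <= y -> rpow x p <= rpow y p.
Proof. intros Hp H. destruct (Req_dec x 0). subst; rewrite rpow_0; apply rpow_nonneg.
 unfold rpow. destruct (Rle_dec x 0); [lra|]. destruct (Rle_dec y 0); [lra|]. apply Rle_Rpower_l; lra. Qed.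
Lemma rpow_1 p : rpow 1 p = 1.
Proof. unfold rpow; destruct Rle_dec; [lra|]. unfold Rpower; rewrite ln_1, Rmult_0_r, exp_0; auto. Qed.
Lemma rpow_mono_p M p q : 1 <= M -> p <= q -> rpow M p <= rpow M q.
Proof. intros; unfold rpow; destruct Rle_dec; [lra|]. apply Rle_Rpower; auto. Qed.
Lemma rpow_mono_p_small x p q : 0 <= x <= 1 -> p <= q -> rpow x q <= rpow x p.
Proof. intros Hx Hpq. destruct (Req_dec x 0). subst; rewrite !rpow_0; lra.
 unfold rpow; destruct Rle_dec; [lra|]. unfold Rpower.
 assert (ln x <= 0). { destruct (Req_dec x 1). subst; rewrite ln_1; lra. left; rewrite <- ln_1; apply ln_increasing; lra. }
 destruct (Req_dec (q * ln x) (p * ln x)). rewrite H1; lra. left; apply exp_increasing. nra. Qed.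
Lemma rpow_max a b p : 0 <= p -> 0 <= a -> 0 <= b -> rpow (Rmax a b) p <= rpow a p + rpow b p.
Proof. intros. assert (0 <= rpow a p) by apply rpow_nonneg. assert (0 <= rpow b p) by apply rpow_nonneg.
 unfold Rmax; destruct Rle_dec; lra. Qed.

Lemma max1 p n (f : nat -> R) (sel : nat -> Prop) : 0 <= p -> (forall i, (i<n)%nat -> 0 <= f i) ->
  exists m, 0 <= m /\ (forall i, (i<n)%nat -> sel i -> f i <= m) /\
   rpow m p <= rsum n (fun i => ifr (sel i) (rpow (f i) p)).
Proof. intros Hp. induction n; intro Hf.
 exists 0; split; [lra|split]. intros; lia. simpl; rewrite rpow_0; lra.
 destruct IHn as [m [Hm [H1 H2]]]. intros; apply Hf; lia.
 assert (Hfn : 0 <= f n) by (apply Hf; lia).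
 exists (Rmax m (ifr (sel n) (f n))). split. eapply Rle_trans; [exact Hm| apply Rmax_l]. split.
 intros i Hi Hs. destruct (Nat.eq_dec i n). subst. rewrite ifr_T by auto. apply Rmax_r.
 eapply Rle_trans; [apply H1; auto; lia| apply Rmax_l].
 simpl. eapply Rle_trans. apply rpow_max; auto. apply ifr_nonneg; auto.
 assert (rpow (ifr (sel n) (f n)) p = ifr (sel n) (rpow (f n) p)).
 { unfold ifr; destruct excluded_middle_informative; auto. apply rpow_0. }
 lra. Qed.

Lemma max2 p nv nu (f : nat -> nat -> R) (sel : nat -> nat -> Prop) : 0 <= p ->
  (forall v u, (v<nv)%nat -> (u<nu)%nat -> 0 <= f v u) ->
  exists m, 0 <= m /\ (forall v u, (v<nv)%nat -> (u<nu)%nat -> sel v u -> f v u <= m) /\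
   rpow m p <= rsum nv (fun v => rsum nu (fun u => ifr (sel v u) (rpow (f v u) p))).
Proof. intros Hp. induction nv; intro Hf.
 exists 0; split; [lra|split]. intros; lia. simpl; rewrite rpow_0; lra.
 destruct IHnv as [m [Hm [H1 H2]]]. intros; apply Hf; lia.
 destruct (max1 p nu (f nv) (sel nv) Hp) as [m' [Hm' [H1' H2']]]. intros; apply Hf; lia.
 exists (Rmax m m'). split. eapply Rle_trans; [exact Hm| apply Rmax_l]. split.
 intros v u Hv Hu Hs. destruct (Nat.eq_dec v nv). subst. eapply Rle_trans; [apply H1'; auto| apply Rmax_r].
 eapply Rle_trans; [apply H1; auto; lia| apply Rmax_l].
 simpl. eapply Rle_trans. apply rpow_max; auto. lra. Qed.

Definition cnt (n : nat) (P : nat -> Prop) : R := rsum n (fun i => ifr (P i) 1).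

Definition rho_of (Nv Nu : nat) (Rel : nat -> nat -> nat -> Prop) (a b : nat -> R) (w : nat) : R :=
  rsum Nv (fun v => rsum Nu (fun u => ifr (Rel w v u) (a v * b u))).

Lemma rho_nonneg Nv Nu Rel a b w : (forall v, (v<Nv)%nat -> 0 <= a v) -> (forall u, (u<Nu)%nat -> 0 <= b u) ->
  0 <= rho_of Nv Nu Rel a b w.
Proof. intros. apply rsum_nonneg; intros; apply rsum_nonneg; intros; apply ifr_nonneg. apply Rmult_le_pos; auto. Qed.

Lemma abstract_mass Nw Nv Nu (a b : nat -> R) Rel M M' p : 1 <= p -> 0 <= M -> 0 <= M' ->
  (forall v, (v<Nv)%nat -> 0 <= a v) -> (forall u, (u<Nu)%nat -> 0 <= b u) ->
  (forall w, (w<Nw)%nat -> rsum Nv (fun v => cnt Nu (fun u => Rel w v u)) <= M) ->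
  (forall v u, (v<Nv)%nat -> (u<Nu)%nat -> cnt Nw (fun w => Rel w v u) <= M') ->
  rsum Nw (fun w => rpow (rho_of Nv Nu Rel a b w) p) <=
    rpow M p * M' * (rsum Nv (fun v => rpow (a v) p) * rsum Nu (fun u => rpow (b u) p)).
Proof. intros Hp HM HM' Ha Hb Hc Hc'.
 apply Rle_trans with (rsum Nw (fun w => rpow M p * rsum Nv (fun v => rsum Nu (fun u =>
     rpow (a v) p * rpow (b u) p * ifr (Rel w v u) 1)))).
 { apply rsum_le; intros w Hw.
   destruct (max2 p Nv Nu (fun v u => a v * b u) (Rel w)) as [m [Hm [H1 H2]]]. lra.
   intros; apply Rmult_le_pos; auto.
   assert (Hr : rho_of Nv Nu Rel a b w <= M * m).
   { apply Rle_trans with (rsum Nv (fun v => rsum Nu (fun u => m * ifr (Rel w v u) 1))).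
     apply rsum_le; intros v Hv; apply rsum_le; intros u Hu. rewrite ifr_mul.
     unfold ifr; destruct excluded_middle_informative. rewrite !Rmult_1_r; apply H1; auto. lra.
     transitivity (m * rsum Nv (fun v => cnt Nu (fun u => Rel w v u))).
     rewrite <- rsum_scal. apply rsum_le; intros. unfold cnt; rewrite rsum_scal; lra.
     rewrite Rmult_comm. apply Rmult_le_compat_r; auto. }
   eapply Rle_trans. apply rpow_le. lra. split. apply rho_nonneg; auto. exact Hr.
   rewrite rpow_mult by auto. apply Rmult_le_compat_l. apply rpow_nonneg.
   eapply Rle_trans; [exact H2|]. apply rsum_le; intros v Hv; apply rsum_le; intros u Hu.
   rewrite rpow_mult by auto. rewrite ifr_mul; lra. }
 rewrite rsum_scal. rewrite Rmult_assoc. apply Rmult_le_compat_l. apply rpow_nonneg.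
 rewrite rsum_swap. 
 apply Rle_trans with (rsum Nv (fun v => rsum Nu (fun u => M' * (rpow (a v) p * rpow (b u) p)))).
 { apply rsum_le; intros v Hv. rewrite rsum_swap. apply rsum_le; intros u Hu.
   rewrite rsum_scal. rewrite (Rmult_comm M'). apply Rmult_le_compat_l.
   apply Rmult_le_pos; apply rpow_nonneg. apply Hc'; auto. }
 apply Req_le. 
 transitivity (M' * rsum Nv (fun v => rsum Nu (fun u => rpow (b u) p) * rpow (a v) p)).
 rewrite <- rsum_scal. apply rsum_ext; intros v Hv.
 rewrite (Rmult_comm (rsum Nu _) (rpow (a v) p)), <- !rsum_scal. apply rsum_ext; intros; lra.
 rewrite (Rmult_comm (rsum Nv _)), <- !rsum_scal. apply rsum_ext; intros; lra. Qed.

Lemma abstract_adm Nw Nv Nu (a b : nat -> R) Rel (mw : nat -> Prop) (P : nat -> nat -> Prop) :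
  (forall v, (v<Nv)%nat -> 0 <= a v) -> (forall u, (u<Nu)%nat -> 0 <= b u) ->
  (forall v u, (v<Nv)%nat -> (u<Nu)%nat -> P v u -> exists w, (w<Nw)%nat /\ mw w /\ Rel w v u) ->
  rsum Nv (fun v => rsum Nu (fun u => ifr (P v u) (a v * b u))) <=
  rsum Nw (fun w => ifr (mw w) (rho_of Nv Nu Rel a b w)).
Proof. intros Ha Hb HP.
 apply Rle_trans with (rsum Nv (fun v => rsum Nu (fun u => a v * b u * rsum Nw (fun w => ifr (mw w) (ifr (Rel w v u) 1))))).
 { apply rsum_le; intros v Hv; apply rsum_le; intros u Hu. rewrite ifr_mul.
   apply Rmult_le_compat_l. apply Rmult_le_pos; auto.
   unfold ifr at 1; destruct excluded_middle_informative as [p|]; [|apply rsum_nonneg; intros; repeat apply ifr_nonneg; lra].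
   destruct (HP v u Hv Hu p) as [w [Hw [H1 H2]]].
   eapply Rle_trans; [|apply (rsum_term _ _ w); [intros; repeat apply ifr_nonneg; lra| auto]].
   simpl. rewrite !ifr_T; auto; lra. }
 apply Req_le. unfold rho_of.
 transitivity (rsum Nv (fun v => rsum Nw (fun w => rsum Nu (fun u => ifr (mw w) (ifr (Rel w v u) (a v * b u)))))).
 apply rsum_ext; intros v Hv. rewrite <- rsum_swap. apply rsum_ext; intros u Hu.
 rewrite <- rsum_scal. apply rsum_ext; intros w Hw. unfold ifr; repeat destruct excluded_middle_informative; lra.
 rewrite rsum_swap. apply rsum_ext; intros w Hw.
 unfold ifr; destruct (excluded_middle_informative (mw w)). auto.
 transitivity (rsum Nv (fun _ => 0)). apply rsum_ext; intros; apply rsum_zero. apply rsum_zero. Qed.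

Definition selb (sel : nat -> Prop) (i : nat) : bool :=
  if excluded_middle_informative (sel i) then true else false.

Lemma cnt_length N sel : cnt N sel = INR (length (filter (selb sel) (seq 0 N))).
Proof. induction N. reflexivity. unfold cnt in *; simpl rsum. rewrite IHN, seq_S, filter_app, length_app.
 rewrite plus_INR. simpl. unfold selb, ifr; destruct excluded_middle_informative; simpl; lra. Qed.

Lemma pigeon N sel (j : nat -> nat) P : (forall i, (i<N)%nat -> sel i -> (j i < P)%nat) ->
  (forall i i', (i<N)%nat -> (i'<N)%nat -> sel i -> sel i' -> j i = j i' -> i = i') -> cnt N sel <= INR P.
Proof. intros H1 H2. rewrite cnt_length. apply le_INR.
 set (l := filter (selb sel) (seq 0 N)).
 assert (Hl : forall i, In i l -> (i < N)%nat /\ sel i).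
 { intros i Hi. unfold l in Hi. apply filter_In in Hi. destruct Hi as [Hi Hs]. apply in_seq in Hi.
   unfold selb in Hs; destruct excluded_middle_informative; [|discriminate]. split; auto; lia. }
 rewrite <- (length_map j). rewrite <- (length_seq P 0). apply NoDup_incl_length.
 apply NoDup_map_NoDup_ForallPairs. intros a b Ha Hb Hab. destruct (Hl a Ha), (Hl b Hb). apply H2; auto.
 unfold l; apply NoDup_filter, seq_NoDup.
 intros x Hx. apply in_map_iff in Hx. destruct Hx as [i [<- Hi]]. destruct (Hl i Hi). apply in_seq. split; [lia|].
 simpl. apply H1; auto. Qed.


Lemma mtr Z (d : Z -> Z -> R) : IsMetric d ->
  (forall x y, 0 <= d x y) /\ (forall x, d x x = 0) /\ (forall x y, d x y = d y x) /\ (forall x y z, d x z <= d x y + d y z).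
Proof. intros [H1 [H2 [H3 H4]]]. repeat split; auto. intro x; apply H2; auto. Qed.

Arguments mtr {Z d}.
Fixpoint build {Z} (g : list Z -> Z) (n : nat) : list Z :=
  match n with O => nil | S m => build g m ++ (g (build g m) :: nil) end.

Lemma build_incl {Z} (g : list Z -> Z) m n : (m <= n)%nat -> incl (build g m) (build g n).
Proof. induction 1. apply incl_refl. simpl. apply incl_appl. auto. Qed.

Lemma net Z (d : Z -> Z -> R) : IsMetric d -> CompactSpace d -> forall e, 0 < e ->
  exists L : list Z, forall z, exists y, In y L /\ d y z < e.
Proof. intros Hm Hc e He. destruct (mtr Hm) as [Dn [Dr [Ds Dt]]].
 apply NNPP; intro Hn.
 assert (H : forall L : list Z, exists z, forall y, In y L -> e <= d y z).
 { intro L. apply NNPP; intro H. apply Hn. exists L. intro z. apply NNPP; intro H'. apply H. exists z.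
   intros y Hy. apply Rnot_lt_le. intro. apply H'. exists y; auto. }
 set (g := fun L => proj1_sig (constructive_indefinite_description _ (H L))).
 assert (Hg : forall L y, In y L -> e <= d y (g L)).
 { intros L. unfold g. destruct constructive_indefinite_description; simpl; auto. }
 set (u := fun n => g (build g n)).
 assert (Hu : forall m n, (m < n)%nat -> e <= d (u m) (u n)).
 { intros m n Hmn. apply Hg. apply (build_incl g (S m) n); [lia|]. simpl. apply in_or_app; right; left; auto. }
 destruct (Hc u) as [phi [z [Hphi Hz]]]. destruct (Hz (e/2)) as [N HN]. lra.
 assert (A1 := HN N ltac:(lia)). assert (A2 := HN (S N) ltac:(lia)).
 assert (A3 := Hu _ _ (Hphi N (S N) ltac:(lia))). assert (A4 := Dt (u (phi N)) z (u (phi (S N)))).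
 rewrite (Ds z) in A4. lra. Qed.

Arguments net {Z d}.
Lemma TB Z (d : Z -> Z -> R) : IsMetric d -> CompactSpace d -> forall e, 0 < e ->
  exists P : nat, forall N sel (q : nat -> Z),
   (forall i j, (i<N)%nat -> (j<N)%nat -> sel i -> sel j -> i <> j -> e <= d (q i) (q j)) ->
   cnt N sel <= INR P.
Proof. intros Hm Hc e He. destruct (mtr Hm) as [Dn [Dr [Ds Dt]]].
 destruct (net Hm Hc (e/2)) as [L HL]. lra. exists (length L). intros N sel q Hsep.
 assert (Hj : forall i, exists j, (j < length L)%nat /\ exists y, nth_error L j = Some y /\ d y (q i) < e/2).
 { intro i. destruct (HL (q i)) as [y [Hy Hd]]. destruct (In_nth_error _ _ Hy) as [j Hj]. exists j. split.
   apply nth_error_Some. rewrite Hj; discriminate. exists y; auto. }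
 set (jf := fun i => proj1_sig (constructive_indefinite_description _ (Hj i))).
 assert (Hjf : forall i, (jf i < length L)%nat /\ exists y, nth_error L (jf i) = Some y /\ d y (q i) < e/2).
 { intro i; unfold jf; destruct constructive_indefinite_description; simpl; auto. }
 apply (pigeon N sel jf). intros; apply Hjf.
 intros i i' Hi Hi' Hs Hs' Heq. destruct (Nat.eq_dec i i') as [|Hne]; auto. exfalso.
 destruct (Hjf i) as [_ [y [Hy Hdy]]]. destruct (Hjf i') as [_ [y' [Hy' Hdy']]].
 rewrite Heq in Hy. rewrite Hy in Hy'. injection Hy' as <-.
 assert (A := Hsep i i' Hi Hi' Hs Hs' Hne). assert (B := Dt (q i) y (q i')). rewrite (Ds (q i) y) in B. lra. Qed.

Arguments TB {Z d}.
Lemma Pack Z (d : Z -> Z -> R) D L0 : IsMetric d -> CompactSpace d -> 0 < D -> 1 <= L0 ->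
  (forall z r, 0 < r <= D -> exists f : Z -> Z, forall x y, ball d z r x -> ball d z r y ->
      (1 / L0) * (d x y / r) <= d (f x) (f y)) ->
  forall lam, 0 < lam -> exists P : nat, forall N sel (q : nat -> Z) x rr, 0 < rr ->
   (forall i, (i<N)%nat -> sel i -> d x (q i) < rr) ->
   (forall i j, (i<N)%nat -> (j<N)%nat -> sel i -> sel j -> i <> j -> lam * rr <= d (q i) (q j)) ->
   cnt N sel <= INR P.
Proof. intros Hm Hc HD HL SS lam Hl.
 destruct (TB Hm Hc (lam / L0)) as [P1 H1]. apply Rdiv_lt_0_compat; lra.
 destruct (TB Hm Hc (lam * D)) as [P2 H2]. nra.
 exists (max P1 P2). intros N sel q x rr Hr Hin Hsep.
 destruct (Rle_dec rr D).
 - destruct (SS x rr) as [f Hf]. lra.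
   eapply Rle_trans; [apply (H1 N sel (fun i => f (q i)))|]. 2: apply le_INR; lia.
   intros i j Hi Hj Hsi Hsj Hne. eapply Rle_trans; [|apply Hf; unfold ball; auto].
   assert (A := Hsep i j Hi Hj Hsi Hsj Hne).
   assert (lam <= d (q i) (q j) / rr). { apply Rmult_le_reg_r with rr; auto. unfold Rdiv; rewrite Rmult_assoc, Rinv_l; lra. }
   unfold Rdiv at 1 2. rewrite Rmult_1_l, (Rmult_comm lam). apply Rmult_le_compat_l. left; apply Rinv_0_lt_compat; lra. exact H.
 - eapply Rle_trans; [apply (H2 N sel q)|]. 2: apply le_INR; lia.
   intros i j Hi Hj Hsi Hsj Hne. assert (A := Hsep i j Hi Hj Hsi Hsj Hne). nra. Qed.

Lemma h_cont Z (d : Z -> Z -> R) c x y : IsMetric d -> Rabs (d c x - d c y) <= d x y.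
Proof. intro Hm; destruct (mtr Hm) as [Dn [Dr [Ds Dt]]]. assert (A := Dt c x y). assert (B := Dt c y x).
 rewrite (Ds y x) in B. apply Rabs_le; lra. Qed.

Lemma exit_up Z (d : Z -> Z -> R) (g : R -> Z) c a t0 ts : IsMetric d -> ContOn01 d g ->
  0 <= t0 -> t0 <= ts -> ts <= 1 -> d c (g t0) < a -> a <= d c (g ts) ->
  exists t1, t0 <= t1 <= ts /\ a <= d c (g t1) /\ forall u, t0 <= u <= t1 -> d c (g u) <= a.
Proof. intros Hm Hg H0 H1 H2 Ha Hb. destruct (mtr Hm) as [Dn [Dr [Ds Dt]]].
 set (S := fun t => t0 <= t <= ts /\ forall u, t0 <= u <= t -> d c (g u) < a).
 assert (Hbd : bound S). { exists ts. intros t [Ht _]. lra. }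
 assert (Hne : exists t, S t). { exists t0. split. lra. intros u Hu. replace u with t0 by lra. auto. }
 destruct (completeness S Hbd Hne) as [t1 [Hub Hlub]].
 assert (Ht0 : t0 <= t1) by (apply Hub; destruct Hne; unfold S; split; [lra| intros u Hu; replace u with t0 by lra; auto]).
 assert (Hts : t1 <= ts) by (apply Hlub; intros t [Ht _]; lra).
 assert (A : forall u, t0 <= u < t1 -> d c (g u) < a).
 { intros u Hu. apply NNPP; intro Hn. assert (t1 <= u). apply Hlub. intros t [Ht Ht']. apply Rnot_lt_le; intro.
   apply Hn, Ht'; lra. lra. }
 assert (HC : forall t e, 0 <= t <= 1 -> 0 < e -> exists de, 0 < de /\ forall s, 0 <= s <= 1 -> Rabs (s - t) < de -> Rabs (d c (g s) - d c (g t)) < e).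
 { intros t e Ht He. destruct (Hg t Ht e He) as [de [Hde Hs]]. exists de; split; auto. intros s Hs1 Hs2.
   eapply Rle_lt_trans. apply h_cont; auto. apply Hs; auto. }
 assert (B1 : d c (g t1) <= a).
 { apply Rnot_lt_le; intro Hgt. destruct (Req_dec t1 t0). subst t1. lra.
   destruct (HC t1 (d c (g t1) - a)) as [de [Hde Hs]]. lra. lra.
   set (u := Rmax t0 (t1 - de/2)). assert (t0 <= u) by apply Rmax_l. assert (u < t1) by (unfold u, Rmax; destruct Rle_dec; lra).
   assert (t1 - de/2 <= u) by apply Rmax_r.
   assert (A1 := A u ltac:(lra)). assert (A2 := Hs u ltac:(lra) ltac:(apply Rabs_def1; lra)).
   apply Rabs_def2 in A2. lra. }
 assert (B2 : a <= d c (g t1)).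
 { apply Rnot_lt_le; intro Hlt. destruct (Req_dec t1 ts). subst t1. lra.
   destruct (HC t1 (a - d c (g t1))) as [de [Hde Hs]]. lra. lra.
   set (t' := Rmin ts (t1 + de/2)). assert (t' <= ts) by apply Rmin_l. assert (t1 < t') by (unfold t', Rmin; destruct Rle_dec; lra).
   assert (t' <= t1 + de/2) by apply Rmin_r.
   assert (t' <= t1). apply Hub. split. lra. intros u Hu. destruct (Rlt_le_dec u t1). apply A; lra.
   assert (A2 := Hs u ltac:(lra) ltac:(apply Rabs_def1; lra)). apply Rabs_def2 in A2. lra. lra. }
 exists t1. split. lra. split. auto. intros u Hu. destruct (Rlt_le_dec u t1). left; apply A; lra. replace u with t1 by lra; auto. Qed.

Lemma refl_cont Z (d : Z -> Z -> R) (g : R -> Z) : ContOn01 d g -> ContOn01 d (fun t => g (1 - t)).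
Proof. intros Hg t Ht e He. destruct (Hg (1-t) ltac:(lra) e He) as [de [Hde Hs]]. exists de; split; auto.
 intros s Hs1 Hs2. apply Hs. lra. replace (1 - s - (1 - t)) with (- (s - t)) by ring. rewrite Rabs_Ropp; auto. Qed.

Lemma eta_cont Z (d : Z -> Z -> R) (g : R -> Z) t0 t1 : ContOn01 d g -> 0 <= t0 <= 1 -> 0 <= t1 <= 1 ->
  ContOn01 d (fun t => g (t0 + t * (t1 - t0))).
Proof. intros Hg H0 H1 t Ht e He.
 assert (Hin : forall s, 0 <= s <= 1 -> 0 <= t0 + s * (t1 - t0) <= 1) by (intros; nra).
 destruct (Hg _ (Hin t Ht) e He) as [de [Hde Hs]]. exists (de / (Rabs (t1 - t0) + 1)). split.
 apply Rdiv_lt_0_compat; auto. assert (0 <= Rabs (t1 - t0)) by apply Rabs_pos. lra.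
 intros s Hs1 Hs2. apply Hs. auto. replace (t0 + s * (t1 - t0) - (t0 + t * (t1 - t0))) with ((s - t) * (t1 - t0)) by ring.
 rewrite Rabs_mult. assert (0 <= Rabs (t1 - t0)) by apply Rabs_pos. assert (0 <= Rabs (s - t)) by apply Rabs_pos.
 apply Rmult_lt_compat_r with (r := Rabs (t1 - t0) + 1) in Hs2; [|lra].
 unfold Rdiv in Hs2. rewrite Rmult_assoc, Rinv_l, Rmult_1_r in Hs2 by lra. nra. Qed.

Lemma exit_curve Z (d : Z -> Z -> R) (g : R -> Z) c a t0 : IsMetric d -> ContOn01 d g ->
  0 <= t0 <= 1 -> d c (g t0) < a -> (exists ts, 0 <= ts <= 1 /\ a <= d c (g ts)) ->
  exists t1, 0 <= t1 <= 1 /\ a <= d c (g t1) /\ forall s, 0 <= s <= 1 -> d c (g (t0 + s * (t1 - t0))) <= a.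
Proof. intros Hm Hg Ht0 Ha [ts [Hts Hb]]. destruct (Rle_dec t0 ts).
 - destruct (exit_up _ d g c a t0 ts Hm Hg (proj1 Ht0) r (proj2 Hts) Ha Hb) as [t1 [H1 [H2 H3]]].
   exists t1. split. lra. split; auto. intros s Hs. apply H3. nra.
 - assert (Hg' := refl_cont _ d g Hg).
   destruct (exit_up _ d (fun t => g (1 - t)) c a (1 - t0) (1 - ts) Hm Hg') as [t1 [H1 [H2 H3]]];
    try lra; try (replace (1 - (1 - t0)) with t0 by ring; auto); try (replace (1 - (1 - ts)) with ts by ring; auto).
   exists (1 - t1). split. lra. split; auto. intros s Hs.
   replace (t0 + s * (1 - t1 - t0)) with (1 - (1 - t0 + s * (t1 - (1 - t0)))) by ring. apply H3. nra. Qed.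

Lemma comp_cont Z (d : Z -> Z -> R) (eta : R -> Z) (f : Z -> Z) (B : Z -> Prop) K : 0 < K -> ContOn01 d eta ->
  (forall t, 0 <= t <= 1 -> B (eta t)) -> (forall x y, B x -> B y -> d (f x) (f y) <= K * d x y) ->
  ContOn01 d (fun t => f (eta t)).
Proof. intros HK He HB Hf t Ht e Hee. destruct (He t Ht (e / K)) as [de [Hde Hs]]. apply Rdiv_lt_0_compat; auto.
 exists de; split; auto. intros s Hs1 Hs2. eapply Rle_lt_trans. apply Hf; apply HB; auto.
 assert (A := Hs s Hs1 Hs2). apply Rmult_lt_compat_l with (r := K) in A; auto. unfold Rdiv in A.
 rewrite <- Rmult_assoc, (Rmult_comm K e), Rmult_assoc, Rinv_r, Rmult_1_r in A; lra. Qed.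

Lemma F0_intro Z (d : Z -> Z -> R) (g : R -> Z) d0 Bd : ContOn01 d g ->
  (forall s t, 0 <= s <= 1 -> 0 <= t <= 1 -> d (g s) (g t) <= Bd) ->
  (exists s t, 0 <= s <= 1 /\ 0 <= t <= 1 /\ d0 <= d (g s) (g t)) -> F0 d d0 g.
Proof. intros Hg HB [s0 [t0 [Hs [Ht Hd]]]]. split; auto.
 set (E := fun u => exists s t, 0 <= s <= 1 /\ 0 <= t <= 1 /\ u = d (g s) (g t)).
 assert (Hb : bound E). { exists Bd. intros u [s [t [H1 [H2 ->]]]]. auto. }
 assert (Hn : exists u, E u). { exists (d (g s0) (g t0)). exists s0, t0; auto. }
 destruct (completeness E Hb Hn) as [D HD]. exists D. split; auto.
 eapply Rle_trans; [exact Hd|]. apply HD. exists s0, t0; auto. Qed.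

Lemma nat_unb r : exists n : nat, r < INR n.
Proof. destruct (archimed r) as [H1 _]. destruct (Z_le_gt_dec (up r) 0).
 exists 0%nat. simpl. apply IZR_le in l. lra.
 exists (Z.to_nat (up r)). rewrite INR_IZR_INZ, Z2Nat.id by lia. lra. Qed.

Lemma incr_ge (phi : nat -> nat) : (forall n m, (n < m)%nat -> (phi n < phi m)%nat) -> forall n, (n <= phi n)%nat.
Proof. intros H n; induction n. lia. assert (A := H n (S n) ltac:(lia)). lia. Qed.

Lemma Zbounded Z (d : Z -> Z -> R) : IsMetric d -> CompactSpace d -> exists B, forall x y, d x y <= B.
Proof. intros Hm Hc. destruct (mtr Hm) as [Dn [Dr [Ds Dt]]]. apply NNPP; intro Hn.
 assert (H : forall B, exists x y, B < d x y).
 { intro B. apply NNPP; intro H; apply Hn. exists B. intros x y. apply Rnot_lt_le. intro. apply H. exists x, y; auto. }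
 destruct (H 0) as [x0 _].
 assert (H' : forall n : nat, exists y, INR n < d x0 y).
 { intro n. destruct (H (2 * INR n)) as [x [y Hxy]]. assert (A := Dt x x0 y). rewrite (Ds x x0) in A.
   destruct (Rlt_le_dec (INR n) (d x0 x)). exists x; auto. exists y. lra. }
 set (u := fun n => proj1_sig (constructive_indefinite_description _ (H' n))).
 assert (Hu : forall n, INR n < d x0 (u n)) by (intro n; unfold u; destruct constructive_indefinite_description; auto).
 destruct (Hc u) as [phi [z [Hphi Hz]]]. destruct (Hz 1) as [N HN]. lra.
 destruct (nat_unb (d x0 z + 1)) as [n Hn']. set (m := max N n).
 assert (A1 := HN m ltac:(lia)). assert (A2 := Hu (phi m)). assert (A3 := Dt x0 z (u (phi m))).
 rewrite (Ds z) in A3. assert (INR n <= INR (phi m)). apply le_INR. assert (A4 := incr_ge phi Hphi m). lia. lra. Qed.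

Lemma strict_sum n f c : (0 < n)%nat -> (forall i, (i < n)%nat -> f i < c) -> rsum n f < INR n * c.
Proof. induction n; intros Hn H. lia. simpl rsum. rewrite S_INR. destruct (Nat.eq_dec n 0). subst. simpl. assert (A := H 0%nat ltac:(lia)). lra.
 assert (A := IHn ltac:(lia) (fun i h => H i ltac:(lia))). assert (B := H n ltac:(lia)). lra. Qed.

Lemma glb_approx (E : R -> Prop) m e : is_glb E m -> 0 < e -> exists x, E x /\ x < m + e.
Proof. intros [H1 H2] He. apply NNPP; intro Hn. assert (m + e <= m). apply H2. intros x Hx. apply Rnot_lt_le. intro; apply Hn; eauto. lra. Qed.

Lemma lim2 X K a b : 0 <= K -> 0 <= a -> 0 <= b -> (forall e, 0 < e -> X <= K * (a + e) * (b + e)) -> X <= K * a * b.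
Proof. intros HK Ha Hb H. apply Rnot_lt_le; intro Hlt. set (dl := X - K * a * b).
 set (e := Rmin 1 (dl / (K * (a + b + 1) + 1))).
 assert (He : 0 < e). { unfold e, Rmin; destruct Rle_dec. lra. apply Rdiv_lt_0_compat. unfold dl; lra. nra. }
 assert (He1 : e <= 1) by apply Rmin_l.
 assert (He2 : e * (K * (a + b + 1) + 1) <= dl).
 { assert (e <= dl / (K * (a + b + 1) + 1)) by apply Rmin_r. apply Rmult_le_compat_r with (r := K * (a + b + 1) + 1) in H0. 2: nra.
   unfold Rdiv in H0. rewrite Rmult_assoc, Rinv_l, Rmult_1_r in H0; nra. }
 assert (A := H e He). assert (K * (a + e) * (b + e) = K * a * b + e * (K * (a + b + e))) by ring.
 assert (e * (K * (a + b + e)) <= e * (K * (a + b + 1))). { apply Rmult_le_compat_l. lra. apply Rmult_le_compat_l; lra. }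
 unfold dl in *. nra. Qed.

Lemma lim1 X K a : 0 <= K -> 0 <= a -> (forall e, 0 < e -> X <= K * (a + e)) -> X <= K * a.
Proof. intros HK Ha H. apply Rnot_lt_le; intro Hlt.
 set (e := (X - K * a) / (K + 1)). assert (He : 0 < e) by (apply Rdiv_lt_0_compat; lra).
 assert (A := H e He). assert (e * (K + 1) = X - K * a) by (unfold e; field; lra). nra. Qed.

Lemma Mp_nonneg Z (A : Approx Z) p rho : 0 <= Mp A p rho.
Proof. apply rsum_nonneg; intros; apply rpow_nonneg. Qed.

Lemma IsMod_nonneg Z (A : Approx Z) p F m : IsMod p F A m -> 0 <= m.
Proof. intros [H1 H2]. apply H2. intros x [rho [_ [_ ->]]]. apply Mp_nonneg. Qed.

Lemma IsMod_empty Z (A : Approx Z) p F m : (forall g, ~ F g) -> IsMod p F A m -> m <= 0.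
Proof. intros HF [H1 H2]. replace 0 with (Mp A p (fun _ => 0)). apply H1. exists (fun _ => 0). split. intros; lra. split.
 intros g Hg; exfalso; eapply HF; eauto. auto. unfold Mp. transitivity (rsum (a_N A) (fun _ => 0)).
 apply rsum_ext; intros; apply rpow_0. apply rsum_zero. Qed.

Lemma mod_lower Z (A : Approx Z) p (F : Curve Z -> Prop) x : 0 <= p -> (exists g, F g) -> (0 < a_N A)%nat ->
  ModValues p F A x -> rpow (/ INR (a_N A)) p <= x.
Proof. intros Hp [g Hg] HN [rho [Hr [Hadm ->]]]. set (N := a_N A) in *.
 assert (HL := Hadm g Hg). assert (HL2 : Lrho A rho g <= rsum N rho).
 { unfold Lrho. apply rsum_le. intros i Hi. destruct excluded_middle_informative. lra. apply Hr; auto. }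
 assert (HNp : 0 < INR N) by (apply lt_0_INR; auto).
 destruct (classic (exists i, (i < N)%nat /\ / INR N <= rho i)) as [[i [Hi Hri]]|Hn].
 - unfold Mp. eapply Rle_trans; [|apply (rsum_term _ _ i); [intros; apply rpow_nonneg| auto]].
   apply rpow_le; auto. split; auto. left; apply Rinv_0_lt_compat; auto.
 - exfalso. assert (rsum N rho < INR N * / INR N). apply strict_sum; auto. intros i Hi. apply Rnot_le_lt. intro; apply Hn; eauto.
   rewrite Rinv_r in H by lra. lra. Qed.

Fixpoint minr (n : nat) (f : nat -> R) : R := match n with O => 1 | S m => Rmin (minr m f) (f m) end.
Lemma minr_le n f k : (k < n)%nat -> minr n f <= f k.
Proof. induction n; intro H. lia. simpl. destruct (Nat.eq_dec k n). subst; apply Rmin_r.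
 eapply Rle_trans; [apply Rmin_l| apply IHn; lia]. Qed.
Lemma minr_pos n f : (forall k, (k < n)%nat -> 0 < f k) -> 0 < minr n f.
Proof. induction n; intro H; simpl. lra. unfold Rmin; destruct Rle_dec. apply IHn; intros; apply H; lia. apply H; lia. Qed.

Lemma sep Z (d : Z -> Z -> R) kappa k (A : Approx Z) i j : IsMetric d -> IsKappaApproxScale d kappa k A ->
  (i < a_N A)%nat -> (j < a_N A)%nat -> i <> j -> / kappa * (/2)^k <= d (a_c A i) (a_c A j).
Proof. intros Hm [_ [_ Hd]] Hi Hj Hne. destruct (mtr Hm) as [Dn [Dr [Ds Dt]]].
 apply Rnot_lt_le; intro Hlt. apply (Hd i j (a_c A j) Hi Hj Hne). unfold ball; auto. unfold ball. rewrite Dr.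
 assert (0 <= d (a_c A i) (a_c A j)) by auto. lra. Qed.

Lemma rk_pos k : 0 < (/2)^k.
Proof. apply pow_lt; lra. Qed.
Lemma rk_le1 k : (/2)^k <= 1.
Proof. induction k; simpl. lra. assert (0 < (/2)^k) by apply rk_pos. lra. Qed.
Lemma rk_mono k K : (k <= K)%nat -> (/2)^K <= (/2)^k.
Proof. intro H. replace K with (k + (K - k))%nat by lia. rewrite pow_add.
 assert (A := rk_le1 (K - k)). assert (B := rk_pos k). assert (C := rk_pos (K-k)). nra. Qed.

Definition RelL Z (d : Z -> Z -> R) (Gk Gl Gkl : Approx Z) (F : nat -> Z -> Z) (s beta rl : R) (w v u : nat) : Prop :=
  d (a_c Gk v) (a_c Gkl w) < s /\ d (F v (a_c Gkl w)) (a_c Gl u) < beta * rl.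

Arguments RelL {Z}.
Lemma div_lt x y s : 0 < s -> x < y * s -> x / s < y.
Proof. intros Hs H. apply Rmult_lt_reg_r with s; auto. unfold Rdiv; rewrite Rmult_assoc, Rinv_l, Rmult_1_r; lra. Qed.
Lemma div_le x y s : 0 < s -> y * s <= x -> y <= x / s.
Proof. intros Hs H. apply Rmult_le_reg_r with s; auto. unfold Rdiv; rewrite Rmult_assoc, Rinv_l, Rmult_1_r; lra. Qed.

Lemma curve_v Z (d : Z -> Z -> R) kappa (Gk Gl Gkl : Approx Z) k l L0 d0 (F : nat -> Z -> Z) (g : Curve Z) v :
  IsMetric d -> 1 <= kappa -> 1 <= L0 ->
  IsKappaApproxScale d kappa k Gk -> IsKappaApproxScale d kappa l Gl -> IsKappaApproxScale d kappa (k + l) Gkl ->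
  0 < d0 -> d0 < / (4 * L0) -> 4 * kappa * (/2)^k < d0 ->
  (forall x y, ball d (a_c Gk v) (4 * kappa * (/2)^k) x -> ball d (a_c Gk v) (4 * kappa * (/2)^k) y ->
     (1 / L0) * (d x y / (4 * kappa * (/2)^k)) <= d (F v x) (F v y) /\
     d (F v x) (F v y) <= L0 * (d x y / (4 * kappa * (/2)^k))) ->
  F0 d d0 g -> (v < a_N Gk)%nat -> curve_meets g (a_V Gk v) ->
  exists cv, F0 d d0 cv /\ forall u, (u < a_N Gl)%nat -> curve_meets cv (a_V Gl u) ->
     exists w, (w < a_N Gkl)%nat /\ curve_meets g (a_V Gkl w) /\
       RelL d Gk Gl Gkl F (4 * kappa * (/2)^k) (kappa + L0 / 4) ((/2)^l) w v u.
Proof. intros Hm Hk HL HGk HGl HGkl Hd0 Hd0' Hsd HF Hg Hv [t0 [Ht0 Hgt0]].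
 destruct (mtr Hm) as [Dn [Dr [Ds Dt]]].
 set (rk := (/2)^k) in *. set (rl := (/2)^l) in *. assert (Hrk : 0 < rk) by apply rk_pos. assert (Hrl : 0 < rl) by apply rk_pos.
 assert (Hrl1 : rl <= 1) by apply rk_le1.
 set (s := 4 * kappa * rk) in *. assert (Hs : 0 < s) by (unfold s; nra).
 set (c := a_c Gk v) in *.
 assert (Hh0 : d c (g t0) < s / 4).
 { destruct HGk as [_ [HB _]]. destruct (HB v Hv) as [_ H2]. assert (A := H2 _ Hgt0). unfold ball in A. unfold s. fold c in A. fold rk in A. lra. }
 destruct Hg as [Hgc [Dg [Hlub Hd0D]]].
 assert (Hts : exists ts, 0 <= ts <= 1 /\ s / 2 <= d c (g ts)).
 { apply NNPP; intro Hn. assert (Dg <= s). apply Hlub. intros u [s1 [t1 [H1 [H2 ->]]]].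
   assert (d c (g s1) < s/2). apply Rnot_le_lt; intro; apply Hn; exists s1; auto.
   assert (d c (g t1) < s/2). apply Rnot_le_lt; intro; apply Hn; exists t1; auto.
   assert (A := Dt (g s1) c (g t1)). rewrite (Ds (g s1) c) in A. lra. lra. }
 destruct (exit_curve Z d g c (s/2) t0 Hm Hgc Ht0 ltac:(lra) Hts) as [t1 [Ht1 [Hh1 Hin]]].
 set (eta := fun t => g (t0 + t * (t1 - t0))).
 assert (Heta : forall t, 0 <= t <= 1 -> ball d c s (eta t)). { intros t Ht. unfold ball, eta. assert (A := Hin t Ht). lra. }
 assert (Hetac := eta_cont Z d g t0 t1 Hgc Ht0 Ht1).
 exists (fun t => F v (eta t)). split.
 - apply F0_intro with (Bd := L0).
   + apply comp_cont with (B := ball d c s) (K := L0 / s). apply Rdiv_lt_0_compat; lra. exact Hetac. exact Heta.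
     intros x y Hx Hy. destruct (HF x y Hx Hy) as [_ H2]. unfold Rdiv in *. lra.
   + intros s1 t2 Hs1 Ht2. destruct (HF _ _ (Heta s1 Hs1) (Heta t2 Ht2)) as [_ H2]. eapply Rle_trans; [exact H2|].
     assert (d (eta s1) (eta t2) <= s). { assert (A := Dt (eta s1) c (eta t2)). rewrite (Ds (eta s1) c) in A.
       assert (B1 := Heta s1 Hs1). assert (B2 := Heta t2 Ht2). unfold ball in *. unfold eta in *.
       assert (C1 := Hin s1 Hs1). assert (C2 := Hin t2 Ht2). lra. }
     assert (d (eta s1) (eta t2) / s <= 1). { unfold Rdiv. apply Rmult_le_reg_r with s; auto. rewrite Rmult_assoc, Rinv_l; lra. }
     nra.
   + exists 0, 1. split; [lra|]. split; [lra|].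
     destruct (HF _ _ (Heta 0 ltac:(lra)) (Heta 1 ltac:(lra))) as [H1 _]. eapply Rle_trans; [|exact H1].
     unfold eta. replace (t0 + 0 * (t1 - t0)) with t0 by ring. replace (t0 + 1 * (t1 - t0)) with t1 by ring.
     assert (A := Dt c (g t0) (g t1)).
     assert (B : 1/4 <= d (g t0) (g t1) / s) by (apply div_le; lra).
     assert (C : / (4 * L0) = 1 / L0 * (1/4)) by (field; lra).
     assert (0 < 1 / L0) by (apply Rdiv_lt_0_compat; lra). nra.
 - intros u Hu [tau [Htau Hmeet]].
   set (y := eta tau). set (T := t0 + tau * (t1 - t0)).
   assert (HT : 0 <= T <= 1) by (unfold T; nra).
   destruct HGkl as [Hcov [HB _]]. destruct (Hcov y) as [w [Hw Hwy]].
   exists w. split; auto. split. exists T. split; auto.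
   assert (Hcw : d (a_c Gkl w) y < kappa * (rk * rl)). { destruct (HB w Hw) as [_ H2]. assert (A := H2 _ Hwy). unfold ball in A. rewrite pow_add in A. auto. }
   assert (Hy : ball d c s y) by (apply Heta; auto).
   assert (Hyin : d c y <= s / 2) by (apply Hin; auto).
   assert (Hkr : kappa * (rk * rl) <= kappa * rk). { apply Rmult_le_compat_l. lra. nra. }
   assert (Hcwb : ball d c s (a_c Gkl w)). { unfold ball. assert (A := Dt c y (a_c Gkl w)). rewrite (Ds y) in A. unfold s in *. lra. }
   split. exact Hcwb.
   destruct (HF _ _ Hcwb Hy) as [_ H2].
   assert (Hq : d (a_c Gkl w) y / s < rl / 4). { apply div_lt; auto. unfold s. nra. }
   destruct HGl as [_ [HBl _]]. destruct (HBl u Hu) as [_ H3]. assert (A3 := H3 _ Hmeet). unfold ball in A3.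
   fold y in A3. fold rl in A3.
   assert (A := Dt (F v (a_c Gkl w)) (F v y) (a_c Gl u)). rewrite (Ds (F v y)) in A.
   assert (L0 * (d (a_c Gkl w) y / s) <= L0 * (rl / 4)) by (apply Rmult_le_compat_l; lra).
   nra. Qed.

Definition PackOK Z (d : Z -> Z -> R) lam P := forall N sel (q : nat -> Z) x rr, 0 < rr ->
   (forall i, (i<N)%nat -> sel i -> d x (q i) < rr) ->
   (forall i j, (i<N)%nat -> (j<N)%nat -> sel i -> sel j -> i <> j -> lam * rr <= d (q i) (q j)) ->
   cnt N sel <= INR P.
Arguments PackOK {Z}.

Lemma Lrho_ifr Z (A : Approx Z) rho g : Lrho A rho g = rsum (a_N A) (fun i => ifr (curve_meets g (a_V A i)) (rho i)).
Proof. reflexivity. Qed.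

Lemma cnt_ifr N (P Q : nat -> Prop) c : 0 <= c -> (forall i, (i < N)%nat -> P i -> Q i) -> cnt N P <= c * cnt N Q -> True.
Proof. auto. Qed.

Lemma cnt_zero N (P : nat -> Prop) : (forall i, (i < N)%nat -> ~ P i) -> cnt N P = 0.
Proof. intro H. unfold cnt. transitivity (rsum N (fun _ => 0)). apply rsum_ext; intros; apply ifr_F; auto. apply rsum_zero. Qed.

Lemma large_bound Z (d : Z -> Z -> R) kappa (Gk Gl Gkl : Approx Z) k l L0 d0 (F : nat -> Z -> Z) P1 P2 P3 p :
  IsMetric d -> 1 <= kappa -> 1 <= L0 -> 1 <= p ->
  IsKappaApproxScale d kappa k Gk -> IsKappaApproxScale d kappa l Gl -> IsKappaApproxScale d kappa (k + l) Gkl ->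
  0 < d0 -> d0 < / (4 * L0) -> 4 * kappa * (/2)^k < d0 ->
  (forall v, (v < a_N Gk)%nat -> forall x y, ball d (a_c Gk v) (4 * kappa * (/2)^k) x -> ball d (a_c Gk v) (4 * kappa * (/2)^k) y ->
     (1 / L0) * (d x y / (4 * kappa * (/2)^k)) <= d (F v x) (F v y) /\
     d (F v x) (F v y) <= L0 * (d x y / (4 * kappa * (/2)^k))) ->
  PackOK d (1 / (4 * kappa * kappa)) P1 -> PackOK d (1 / (kappa * (kappa + L0 / 4))) P2 ->
  PackOK d (1 / (4 * kappa * kappa * L0 * (kappa + L0 / 4))) P3 ->
  forall a b, (forall i, (i < a_N Gk)%nat -> 0 <= a i) -> (forall g, F0 d d0 g -> 1 <= Lrho Gk a g) ->
  (forall i, (i < a_N Gl)%nat -> 0 <= b i) -> (forall g, F0 d d0 g -> 1 <= Lrho Gl b g) ->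
  forall Mkl, IsMod p (F0 d d0) Gkl Mkl ->
  Mkl <= rpow (INR P1 * INR P2 + 1) p * INR P3 * (Mp Gk p a * Mp Gl p b).
Proof. intros Hm Hk HL Hp HGk HGl HGkl Hd0 Hd0' Hsd HF HP1 HP2 HP3 a b Ha Hadma Hb Hadmb Mkl HMod.
 destruct (mtr Hm) as [Dn [Dr [Ds Dt]]].
 set (s := 4 * kappa * (/2)^k) in *. set (beta := kappa + L0 / 4) in *. set (rl := (/2)^l) in *.
 assert (Hrk : 0 < (/2)^k) by apply rk_pos. assert (Hrl : 0 < rl) by apply rk_pos.
 assert (Hs : 0 < s) by (unfold s; nra). assert (Hbeta : 0 < beta) by (unfold beta; nra).
 set (N1 := a_N Gk) in *. set (N2 := a_N Gl) in *. set (N3 := a_N Gkl) in *.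
 set (Rel := RelL d Gk Gl Gkl F s beta rl).
 set (rho := rho_of N1 N2 Rel a b).
 assert (Hrho : forall w, 0 <= rho w) by (intro; apply rho_nonneg; auto).
 apply Rle_trans with (Mp Gkl p rho).
 { destruct HMod as [H1 _]. apply H1. exists rho. split. intros; auto. split; [|reflexivity].
   intros g Hg. rewrite Lrho_ifr.
   assert (Hcv : forall v, exists cv, (v < N1)%nat -> curve_meets g (a_V Gk v) -> F0 d d0 cv /\
       forall u, (u < N2)%nat -> curve_meets cv (a_V Gl u) -> exists w, (w < N3)%nat /\ curve_meets g (a_V Gkl w) /\ Rel w v u).
   { intro v. destruct (classic ((v < N1)%nat /\ curve_meets g (a_V Gk v))) as [[Hv Hmv]|Hn].
     - destruct (curve_v Z d kappa Gk Gl Gkl k l L0 d0 F g v Hm Hk HL HGk HGl HGkl Hd0 Hd0' Hsd (HF v Hv) Hg Hv Hmv) as [cv Hcv].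
       exists cv; intros; auto.
     - exists g. intros; exfalso; auto. }
   set (cf := fun v => proj1_sig (constructive_indefinite_description _ (Hcv v))).
   assert (Hcf : forall v, (v < N1)%nat -> curve_meets g (a_V Gk v) -> F0 d d0 (cf v) /\
       forall u, (u < N2)%nat -> curve_meets (cf v) (a_V Gl u) -> exists w, (w < N3)%nat /\ curve_meets g (a_V Gkl w) /\ Rel w v u).
   { intro v; unfold cf; destruct constructive_indefinite_description; simpl; auto. }
   eapply Rle_trans; [|apply (abstract_adm N3 N1 N2 a b Rel (fun w => curve_meets g (a_V Gkl w))
        (fun v u => curve_meets g (a_V Gk v) /\ curve_meets (cf v) (a_V Gl u)) Ha Hb)].
   2: { intros v u Hv Hu [Hq1 Hq2]. apply (proj2 (Hcf v Hv Hq1)); auto. }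
   eapply Rle_trans; [apply (Hadma g Hg)|]. rewrite Lrho_ifr. apply rsum_le. intros v Hv.
   transitivity (ifr (curve_meets g (a_V Gk v)) (a v * Lrho Gl b (cf v))).
   + unfold ifr at 1 2. destruct excluded_middle_informative; [|lra].
     destruct (Hcf v Hv c) as [HF0 _]. assert (A := Hadmb _ HF0). assert (B := Ha v Hv). nra.
   + apply Req_le. rewrite Lrho_ifr. unfold ifr at 1. destruct excluded_middle_informative.
     rewrite <- rsum_scal. apply rsum_ext; intros u Hu. rewrite ifr_and, (ifr_T (curve_meets g (a_V Gk v))) by auto. unfold ifr; destruct excluded_middle_informative; lra.
     symmetry. transitivity (rsum N2 (fun _ => 0)). apply rsum_ext; intros; apply ifr_F; tauto. apply rsum_zero. }
 unfold Mp. fold N3 N1 N2.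
 apply abstract_mass; auto.
 - assert (0 <= INR P1) by apply pos_INR. assert (0 <= INR P2) by apply pos_INR. nra.
 - apply pos_INR.
 - intros w Hw.
   apply Rle_trans with (rsum N1 (fun v => INR P2 * ifr (d (a_c Gk v) (a_c Gkl w) < s) 1)).
   + apply rsum_le; intros v Hv. destruct (classic (d (a_c Gk v) (a_c Gkl w) < s)) as [Hr1|Hr1]; [rewrite (ifr_T _ 1 Hr1)|rewrite (ifr_F _ 1 Hr1)].
     * rewrite Rmult_1_r. apply (HP2 N2 (fun u => Rel w v u) (a_c Gl) (F v (a_c Gkl w)) (beta * rl)). nra.
       intros u Hu [_ H2]; auto.
       intros i j Hi Hj _ _ Hne. replace (1 / (kappa * beta) * (beta * rl)) with (/ kappa * rl) by (field; lra).
       apply (sep Z d kappa l); auto.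
     * rewrite cnt_zero. lra. intros u Hu [H1 _]; auto.
   + rewrite rsum_scal. assert (cnt N1 (fun v => d (a_c Gk v) (a_c Gkl w) < s) <= INR P1).
     { apply (HP1 N1 _ (a_c Gk) (a_c Gkl w) s Hs). intros i Hi H; rewrite Ds; auto.
       intros i j Hi Hj _ _ Hne. replace (1 / (4 * kappa * kappa) * s) with (/ kappa * (/2)^k) by (unfold s; field; lra).
       apply (sep Z d kappa k); auto. }
     unfold cnt in H. assert (0 <= INR P2) by apply pos_INR. nra.
 - intros v u Hv Hu. apply (HP3 N3 (fun w => Rel w v u) (fun w => F v (a_c Gkl w)) (a_c Gl u) (beta * rl)). nra.
   intros w Hw [_ H2]. rewrite Ds; auto.
   intros i j Hi Hj [Hi1 _] [Hj1 _] Hne. destruct (HF v Hv (a_c Gkl i) (a_c Gkl j) Hi1 Hj1) as [H1 _].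
   eapply Rle_trans; [|exact H1].
   assert (A := sep Z d kappa (k + l) Gkl i j Hm HGkl Hi Hj Hne). rewrite pow_add in A. fold rl in A.
   assert (B : rl / (4 * kappa * kappa) <= d (a_c Gkl i) (a_c Gkl j) / s).
   { apply div_le; auto. unfold s. replace (rl / (4 * kappa * kappa) * (4 * kappa * (/ 2) ^ k)) with (/ kappa * ((/ 2) ^ k * rl)) by (field; lra). auto. }
   replace (1 / (4 * kappa * kappa * L0 * beta) * (beta * rl)) with (1 / L0 * (rl / (4 * kappa * kappa))) by (field; lra).
   apply Rmult_le_compat_l; auto. left; apply Rdiv_lt_0_compat; lra. Qed.

Lemma small_bound Z (d : Z -> Z -> R) kappa (Gl Gkl : Approx Z) k l K0 P4 P5 p (Fm : Curve Z -> Prop) :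
  IsMetric d -> 1 <= kappa -> 1 <= p -> (k <= K0)%nat ->
  IsKappaApproxScale d kappa l Gl -> IsKappaApproxScale d kappa (k + l) Gkl ->
  PackOK d (1 / (2 * kappa * kappa)) P4 -> PackOK d ((/2)^K0 / (2 * kappa * kappa)) P5 ->
  forall b, (forall i, (i < a_N Gl)%nat -> 0 <= b i) -> (forall g, Fm g -> 1 <= Lrho Gl b g) ->
  forall Mkl, IsMod p Fm Gkl Mkl -> Mkl <= rpow (INR P4 + 1) p * INR P5 * Mp Gl p b.
Proof. intros Hm Hk Hp HkK HGl HGkl HP4 HP5 b Hb Hadmb Mkl HMod.
 destruct (mtr Hm) as [Dn [Dr [Ds Dt]]].
 set (rl := (/2)^l) in *. assert (Hrk : 0 < (/2)^k) by apply rk_pos. assert (Hrl : 0 < rl) by apply rk_pos.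
 assert (Hrk1 : (/2)^k <= 1) by apply rk_le1.
 set (N2 := a_N Gl) in *. set (N3 := a_N Gkl) in *.
 set (Rel := fun w (v : nat) u => d (a_c Gkl w) (a_c Gl u) < kappa * ((/2)^k * rl) + kappa * rl).
 set (a := fun _ : nat => 1).
 set (rho := rho_of 1 N2 Rel a b).
 assert (Ha : forall v, (v < 1)%nat -> 0 <= a v) by (intros; unfold a; lra).
 assert (Hrho : forall w, 0 <= rho w) by (intro; apply rho_nonneg; auto).
 apply Rle_trans with (Mp Gkl p rho).
 { destruct HMod as [H1 _]. apply H1. exists rho. split. intros; auto. split; [|reflexivity].
   intros g Hg. rewrite Lrho_ifr.
   eapply Rle_trans; [|apply (abstract_adm N3 1 N2 a b Rel (fun w => curve_meets g (a_V Gkl w))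
        (fun v u => curve_meets g (a_V Gl u)) Ha Hb)].
   - eapply Rle_trans; [apply (Hadmb g Hg)|]. rewrite Lrho_ifr. apply Req_le. simpl. rewrite Rplus_0_l.
     apply rsum_ext; intros u Hu. unfold a; rewrite Rmult_1_l; auto.
   - intros v u Hv Hu [T [HT Hmeet]]. destruct HGkl as [Hcov [HB _]]. destruct (Hcov (g T)) as [w [Hw Hwy]].
     exists w. split; auto. split. exists T; auto.
     destruct (HB w Hw) as [_ H2]. assert (A := H2 _ Hwy). unfold ball in A. rewrite pow_add in A.
     destruct HGl as [_ [HBl _]]. destruct (HBl u Hu) as [_ H3]. assert (A3 := H3 _ Hmeet). unfold ball in A3. fold rl in A3.
     unfold Rel. assert (B := Dt (a_c Gkl w) (g T) (a_c Gl u)). rewrite (Ds (g T) (a_c Gl u)) in B. fold rl in A. lra. }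
 unfold Mp. fold N3 N2.
 eapply Rle_trans. apply (abstract_mass N3 1 N2 a b Rel (INR P4 + 1) (INR P5) p); auto.
 - assert (0 <= INR P4) by apply pos_INR. lra.
 - apply pos_INR.
 - intros w Hw. simpl. rewrite Rplus_0_l.
   assert (cnt N2 (fun u => Rel w 0%nat u) <= INR P4). 2: lra.
   apply (HP4 N2 _ (a_c Gl) (a_c Gkl w) (2 * kappa * rl)). nra.
   intros u Hu H. unfold Rel in H. assert (kappa * ((/ 2) ^ k * rl) <= kappa * rl) by (apply Rmult_le_compat_l; nra). lra.
   intros i j Hi Hj _ _ Hne. replace (1 / (2 * kappa * kappa) * (2 * kappa * rl)) with (/ kappa * rl) by (field; lra).
   apply (sep Z d kappa l); auto.
 - intros v u Hv Hu. apply (HP5 N3 _ (a_c Gkl) (a_c Gl u) (2 * kappa * rl)). nra.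
   intros w Hw H. unfold Rel in H. rewrite Ds. assert (kappa * ((/ 2) ^ k * rl) <= kappa * rl) by (apply Rmult_le_compat_l; nra). lra.
   intros i j Hi Hj _ _ Hne. assert (A := sep Z d kappa (k + l) Gkl i j Hm HGkl Hi Hj Hne). rewrite pow_add in A. fold rl in A.
   replace ((/ 2) ^ K0 / (2 * kappa * kappa) * (2 * kappa * rl)) with (/ kappa * ((/2)^K0 * rl)) by (field; lra).
   eapply Rle_trans; [|exact A]. apply Rmult_le_compat_l. left; apply Rinv_0_lt_compat; lra.
   apply Rmult_le_compat_r. lra. apply rk_mono; auto.
 - apply Req_le. simpl. rewrite rpow_1. ring. Qed.

Theorem mainTheorem10 (Z : Type) (d : Z -> Z -> R) :
  IsMetric d -> CompactSpace d -> ArcConnected d -> ApproxSelfSimilar d ->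
  exists delta, 0 < delta /\
  forall (kappa : R) (G : nat -> Approx Z),
    1 <= kappa -> IsKappaApprox d kappa G ->
    forall d0, 0 < d0 < delta ->
      (forall p, 1 <= p -> exists C, 0 < C /\
         forall (k l : nat) (Mk Ml Mkl : R),
           IsMod p (F0 d d0) (G k) Mk -> IsMod p (F0 d d0) (G l) Ml ->
           IsMod p (F0 d d0) (G (k + l)%nat) Mkl ->
           Mkl <= C * Mk * Ml) /\
      (forall b, 1 <= b -> exists C, 0 < C /\
         forall p, 1 <= p <= b ->
         forall (k l : nat) (Mk Ml Mkl : R),
           IsMod p (F0 d d0) (G k) Mk -> IsMod p (F0 d d0) (G l) Ml ->
           IsMod p (F0 d d0) (G (k + l)%nat) Mkl ->
           Mkl <= C * Mk * Ml).
Proof.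
 intros Hm Hc _ [L0 [HL0 SS]].
 exists (/ (4 * L0)). split. apply Rinv_0_lt_compat; lra.
 intros kappa G Hk HG d0 Hd0.
 destruct (mtr Hm) as [Dn [Dr [Ds Dt]]].
 assert (U : forall b, 1 <= b -> exists C, 0 < C /\
         forall p, 1 <= p <= b ->
         forall (k l : nat) (Mk Ml Mkl : R),
           IsMod p (F0 d d0) (G k) Mk -> IsMod p (F0 d d0) (G l) Ml ->
           IsMod p (F0 d d0) (G (k + l)%nat) Mkl ->
           Mkl <= C * Mk * Ml).
 2: { split; auto. intros p Hp. destruct (U p Hp) as [C [HC HU]]. exists C. split; auto.
      intros k l Mk Ml Mkl H1 H2 H3. apply (HU p ltac:(lra) k l); auto. }
 intros b Hb.
 destruct (classic (exists g, F0 d d0 g)) as [[g0 Hg0] | Hne].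
 2: { exists 1. split; [lra|]. intros p Hp k l Mk Ml Mkl H1 H2 H3.
      assert (A := IsMod_empty Z _ p _ Mkl (fun g Hg => Hne (ex_intro _ g Hg)) H3).
      assert (B1 := IsMod_nonneg Z _ _ _ _ H1). assert (B2 := IsMod_nonneg Z _ _ _ _ H2). nra. }
 destruct (Zbounded Z d Hm Hc) as [B HB].
 set (E := fun t => exists x y, t = d x y).
 destruct (completeness E) as [D HD]. exists B. intros t [x [y ->]]. auto. exists (d (g0 0) (g0 0)). exists (g0 0), (g0 0); auto.
 assert (HDd0 : d0 <= D).
 { destruct Hg0 as [_ [Dg [Hlub Hle]]]. eapply Rle_trans; [exact Hle|]. apply Hlub. intros u [s [t [_ [_ ->]]]].
   apply HD. exists (g0 s), (g0 t); auto. }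
 assert (HDpos : 0 < D) by lra.
 assert (SS' : forall z r, 0 < r <= D -> exists f : Z -> Z, forall x y, ball d z r x -> ball d z r y ->
      (1 / L0) * (d x y / r) <= d (f x) (f y) /\ d (f x) (f y) <= L0 * (d x y / r)).
 { intros z r Hr. destruct (SS D z r HD Hr) as [U' [f [_ [_ [_ Hf]]]]]. exists f; auto. }
 assert (Hpk := Pack Z d D L0 Hm Hc HDpos HL0
   (fun z r Hr => match SS' z r Hr with ex_intro _ f Hf => ex_intro _ f (fun x y Hx Hy => proj1 (Hf x y Hx Hy)) end)).
 assert (Hk0 : 0 < kappa) by lra.
 destruct (Hpk (1 / (4 * kappa * kappa))) as [P1 HP1]. apply Rdiv_lt_0_compat; nra.
 destruct (Hpk (1 / (kappa * (kappa + L0 / 4)))) as [P2 HP2]. apply Rdiv_lt_0_compat; nra.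
 destruct (Hpk (1 / (4 * kappa * kappa * L0 * (kappa + L0 / 4)))) as [P3 HP3].
   apply Rdiv_lt_0_compat. lra. assert (0 < 4 * kappa * kappa * L0) by (repeat apply Rmult_lt_0_compat; lra). nra.
 destruct (Hpk (1 / (2 * kappa * kappa))) as [P4 HP4]. apply Rdiv_lt_0_compat; nra.
 destruct (pow_lt_1_zero (/2) ltac:(rewrite Rabs_pos_eq; lra) (Rmin D d0 / (4 * kappa))) as [K0 HK0].
   apply Rdiv_lt_0_compat. unfold Rmin; destruct Rle_dec; lra. lra.
 destruct (Hpk ((/2)^K0 / (2 * kappa * kappa))) as [P5 HP5]. apply Rdiv_lt_0_compat. apply rk_pos. nra.
 assert (HK : forall k, (K0 <= k)%nat -> 4 * kappa * (/2)^k < D /\ 4 * kappa * (/2)^k < d0).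
 { intros k Hkk. assert (A := HK0 k Hkk). rewrite Rabs_pos_eq in A by (left; apply rk_pos).
   assert (A2 : 4 * kappa * (/2)^k < Rmin D d0).
   { assert (E4 : 4 * kappa * (Rmin D d0 / (4 * kappa)) = Rmin D d0) by (field; lra).
     apply Rmult_lt_compat_l with (r := 4 * kappa) in A; [|lra]. lra. }
   split; eapply Rlt_le_trans; try exact A2; [apply Rmin_l| apply Rmin_r]. }
 assert (HN : forall k, (0 < a_N (G k))%nat).
 { intro k. destruct (HG k) as [Hcov _]. destruct (Hcov (g0 0)) as [i [Hi _]]. lia. }
 set (m0 := minr K0 (fun k => rpow (/ INR (a_N (G k))) b)).
 assert (Hm0 : 0 < m0). { apply minr_pos. intros. apply rpow_pos. apply Rinv_0_lt_compat, lt_0_INR; auto. }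
 set (Kl := rpow (INR P1 * INR P2 + 1) b * INR P3).
 set (Ks := rpow (INR P4 + 1) b * INR P5).
 assert (HKl : 0 <= Kl) by (unfold Kl; apply Rmult_le_pos; [apply rpow_nonneg| apply pos_INR]).
 assert (HKs : 0 <= Ks) by (unfold Ks; apply Rmult_le_pos; [apply rpow_nonneg| apply pos_INR]).
 exists (Kl + Ks / m0 + 1). split. assert (0 <= Ks / m0) by (apply Rmult_le_pos; [lra| left; apply Rinv_0_lt_compat; lra]). lra.
 intros p Hp k l Mk Ml Mkl HMk HMl HMkl.
 assert (HMk0 := IsMod_nonneg Z _ _ _ _ HMk). assert (HMl0 := IsMod_nonneg Z _ _ _ _ HMl).
 assert (HP12 : 0 <= INR P1 * INR P2) by (apply Rmult_le_pos; apply pos_INR).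
 assert (HKs0 : 0 <= Ks / m0) by (apply Rmult_le_pos; [lra| left; apply Rinv_0_lt_compat; lra]).
 destruct (Compare_dec.le_lt_dec K0 k) as [Hkk|Hkk].
 - destruct (HK k Hkk) as [HsD Hsd0]. set (s := 4 * kappa * (/2)^k) in *.
   assert (Hs : 0 < s) by (unfold s; assert (0 < (/2)^k) by apply rk_pos; nra).
   assert (HFv : forall v, exists f : Z -> Z, forall x y, ball d (a_c (G k) v) s x -> ball d (a_c (G k) v) s y ->
      (1 / L0) * (d x y / s) <= d (f x) (f y) /\ d (f x) (f y) <= L0 * (d x y / s)).
   { intro v. apply SS'. lra. }
   set (F := fun v => proj1_sig (constructive_indefinite_description _ (HFv v))).
   assert (HF : forall v, (v < a_N (G k))%nat -> forall x y, ball d (a_c (G k) v) s x -> ball d (a_c (G k) v) s y ->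
      (1 / L0) * (d x y / s) <= d (F v x) (F v y) /\ d (F v x) (F v y) <= L0 * (d x y / s)).
   { intros v _. unfold F; destruct constructive_indefinite_description; simpl; auto. }
   assert (Hmain : Mkl <= Kl * Mk * Ml).
   { apply lim2; auto. intros e He.
     destruct (glb_approx _ _ e HMk He) as [x [[a [Ha [Hadma ->]]] Hx]].
     destruct (glb_approx _ _ e HMl He) as [y [[bb [Hbb [Hadmb ->]]] Hy]].
     eapply Rle_trans. apply (large_bound Z d kappa (G k) (G l) (G (k + l)%nat) k l L0 d0 F P1 P2 P3 p); auto; lra.
     assert (A1 := Mp_nonneg Z (G k) p a). assert (A2 := Mp_nonneg Z (G l) p bb).
     assert (A3 : rpow (INR P1 * INR P2 + 1) p * INR P3 <= Kl).
     { unfold Kl. apply Rmult_le_compat_r. apply pos_INR. apply rpow_mono_p; lra. }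
     assert (A4 : 0 <= rpow (INR P1 * INR P2 + 1) p * INR P3) by (apply Rmult_le_pos; [apply rpow_nonneg|apply pos_INR]).
     assert (A5 : Mp (G k) p a * Mp (G l) p bb <= (Mk + e) * (Ml + e)) by (apply Rmult_le_compat; lra).
     assert (A6 : 0 <= Mp (G k) p a * Mp (G l) p bb) by nra.
     apply Rle_trans with (Kl * (Mp (G k) p a * Mp (G l) p bb)). apply Rmult_le_compat_r; lra.
     rewrite Rmult_assoc. apply Rmult_le_compat_l; lra. }
   assert (0 <= Mk * Ml) by nra. nra.
 - assert (HMkm : m0 <= Mk).
   { destruct HMk as [_ H2]. apply H2. intros x Hx.
     eapply Rle_trans; [|apply (mod_lower Z (G k) p (F0 d d0) x); auto; try lra; exists g0; auto].
     eapply Rle_trans. apply minr_le; exact Hkk. simpl.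
     apply rpow_mono_p_small; [|lra]. assert (1 <= INR (a_N (G k))) by (apply (le_INR 1); apply HN).
     split. left; apply Rinv_0_lt_compat; lra. rewrite <- Rinv_1. apply Rinv_le_contravar; lra. }
   assert (Hs : Mkl <= Ks * Ml).
   { apply lim1; auto. intros e He.
     destruct (glb_approx _ _ e HMl He) as [y [[bb [Hbb [Hadmb ->]]] Hy]].
     eapply Rle_trans. apply (small_bound Z d kappa (G l) (G (k + l)%nat) k l K0 P4 P5 p (F0 d d0)); auto; try lia; try lra.
     assert (A2 := Mp_nonneg Z (G l) p bb).
     assert (A3 : rpow (INR P4 + 1) p * INR P5 <= Ks).
     { unfold Ks. apply Rmult_le_compat_r. apply pos_INR. apply rpow_mono_p. assert (0 <= INR P4) by apply pos_INR. lra. lra. }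
     assert (A4 : 0 <= rpow (INR P4 + 1) p * INR P5) by (apply Rmult_le_pos; [apply rpow_nonneg|apply pos_INR]).
     apply Rle_trans with (Ks * Mp (G l) p bb). apply Rmult_le_compat_r; lra. apply Rmult_le_compat_l; lra. }
   assert (Ks * Ml <= Ks / m0 * Mk * Ml).
   { replace (Ks * Ml) with (Ks / m0 * m0 * Ml) by (field; lra). apply Rmult_le_compat_r; auto. apply Rmult_le_compat_l; auto. }
   assert (0 <= Mk * Ml) by nra. nra.
Qed.
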